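(* Let $n\ge 3$, $k\ge 1$ and $p\in\{0,1,2\}$. Then \[ \Gamma_{\rm S}(C_n,C_{3k+p})= \begin{cases} kn, & p=0,\\ kn+\lceil n/3\rceil, & p=1,\\ (k+1)n, & p=2. \end{cases} \]
   Context: $C_m$ denotes the cycle on $m$ vertices; $\gamma$ denotes the domination number. For graphs $G,H$ and a function $f\colon V(G)\to V(H)$, the Sierpiński product $G\otimes_f H$ is the graph with vertex set $V(G)\times V(H)$ and edges of two types: (type 1) $(g,h)(g,h')$ for every $g\in V(G)$ and every edge $hh'\in E(H)$; (type 2) $(g,f(g'))(g',f(g))$ for every edge $gg'\in E(G)$. The upper Sierpiński domination number is $\Gamma_{\rm S}(G,H)=\max_{f}\gamma(G\otimes_f H)$ over all functions $f\colon V(G)\to V(H)$. *)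

(* Defs.v *)
From mathcomp Require Import all_boot.
Set Implicit Arguments. Unset Strict Implicit. Unset Printing Implicit Defensive.

(* Simple graphs are symmetric irreflexive relations on a finType. *)

(* The cycle C_m on vertex set 'I_m = {0,...,m-1}: i ~ j iff j = i+1 mod m
   or i = j+1 mod m (a simple cycle whenever m >= 3). *)
Definition cycle_rel (m : nat) : rel 'I_m :=
  fun i j => (val j == (val i).+1 %% m) || (val i == (val j).+1 %% m).

Arguments cycle_rel : clear implicits.

Definition sierp_rel (G H : finType) (eG : rel G) (eH : rel H) (f : G -> H)
  : rel (G * H) :=
  fun x y =>
    ((x.1 == y.1) && eH x.2 y.2)
    || [&& eG x.1 y.1, x.2 == f y.1 & y.2 == f x.1].

Definition dominating (T : finType) (e : rel T) (D : {set T}) : bool :=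
  [forall x, (x \in D) || [exists y in D, e x y]].

Definition domination_number (T : finType) (e : rel T) : nat :=
  \big[minn/#|T|]_(D : {set T} | dominating e D) #|D|.

Definition upper_sierp_dom (G H : finType) (eG : rel G) (eH : rel H) : nat :=
  \max_(f : {ffun G -> H}) domination_number (sierp_rel eG eH f).

(* Main.v *)
Require Import Defs.
From mathcomp Require Import all_boot zify.
Set Implicit Arguments. Unset Strict Implicit.

Ltac crush :=
  repeat (match goal with
    | H : context [if _ then _ else _] |- _ => revert H
    | |- context [if ?b then _ else _] => let E := fresh "E" in case E: b
    end); simpl in *; lia.

Section Cyc.
Variable m : nat.

Definition sv (x : nat) := if x.+1 == m then 0 else x.+1.
Definition pv (x : nat) := if x == 0 then m.-1 else x.-1.

Lemma sv_lt (x : 'I_m) : sv x < m.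
Proof. have := ltn_ord x; rewrite /sv; case: ifP => /eqP; lia. Qed.
Lemma pv_lt (x : 'I_m) : pv x < m.
Proof. have := ltn_ord x; rewrite /pv; case: ifP => /eqP; lia. Qed.

Definition succo (x : 'I_m) : 'I_m := Ordinal (sv_lt x).
Definition predo (x : 'I_m) : 'I_m := Ordinal (pv_lt x).

Lemma modS (x : 'I_m) : x.+1 %% m = sv x.
Proof.
have := ltn_ord x; rewrite /sv; case: ifP => /eqP H Hx.
  by rewrite H modnn.
by rewrite modn_small; lia.
Qed.

Lemma cyc_relE (x y : 'I_m) :
  cycle_rel m x y = (val y == sv x) || (val x == sv y).
Proof. by rewrite /cycle_rel !modS. Qed.

Lemma cyc_succ (x : 'I_m) : cycle_rel m x (succo x).
Proof. by rewrite cyc_relE /= eqxx. Qed.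

Lemma cyc_pred (x : 'I_m) : cycle_rel m x (predo x).
Proof.
rewrite cyc_relE /=; apply/orP; right; apply/eqP.
have := ltn_ord x; rewrite /sv /pv; case: ifP => /eqP; case: ifP => /eqP; lia.
Qed.

Lemma predo_succo (x : 'I_m) : predo (succo x) = x.
Proof.
apply: val_inj => /=; have := ltn_ord x; rewrite /sv /pv.
case: ifP => /eqP; case: ifP => /eqP; lia.
Qed.

Lemma succo_predo (x : 'I_m) : succo (predo x) = x.
Proof.
apply: val_inj => /=; have := ltn_ord x; rewrite /sv /pv.
case: ifP => /eqP; case: ifP => /eqP; lia.
Qed.

Lemma cyc_nb (x y : 'I_m) : cycle_rel m x y -> x = succo y \/ x = predo y.
Proof.
rewrite cyc_relE => /orP [] /eqP H; [right|left]; apply: val_inj => /=;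
have := ltn_ord x; have := ltn_ord y; move: H; rewrite /sv /pv; crush.
Qed.

Definition nbh (S : {set 'I_m}) : {set 'I_m} :=
  [set x | (x \in S) || [exists y in S, cycle_rel m x y]].

Lemma card_nbh S : #|nbh S| <= 3 * #|S|.
Proof.
apply: (@leq_trans #|S :|: succo @: S :|: predo @: S|).
  apply: subset_leq_card; apply/subsetP => x; rewrite !inE => /orP [->//|].
  case/existsP => y /andP [yS /cyc_nb [->|->]].
    by rewrite (imset_f _ yS) orbT.
  by rewrite (imset_f _ yS) !orbT.
apply: (leq_trans (leq_card_setU _ _)).
apply: (@leq_trans (#|S| + #|S| + #|S|)); last by rewrite !mulSn addn0 addnA.
apply: leq_add; last exact: leq_imset_card.
apply: (leq_trans (leq_card_setU _ _)); apply: leq_add => //; exact: leq_imset_card.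
Qed.

Definition dist (z h : 'I_m) : nat := if z <= h then h - z else h + m - z.

Lemma dist_lt z h : dist z h < m.
Proof. have := ltn_ord z; have := ltn_ord h; rewrite /dist; crush. Qed.

Lemma dist0 z h : dist z h = 0 -> h = z.
Proof.
move=> H; apply: val_inj; move: H.
have := ltn_ord z; have := ltn_ord h; rewrite /dist; crush.
Qed.

Lemma dist_inj z h h' : dist z h = dist z h' -> h = h'.
Proof.
move=> H; apply: val_inj; move: H.
have := ltn_ord z; have := ltn_ord h; have := ltn_ord h'; rewrite /dist;
case: ifP; crush.
Qed.

Lemma dist_succ_r z h : dist z (succo h) = if dist z h == m.-1 then 0 else (dist z h).+1.
Proof.
have := ltn_ord z; have := ltn_ord h; rewrite /dist /= /sv.
case E: (h.+1 == m); crush.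
Qed.

Lemma dist_pred_r z h : dist z (predo h) = if dist z h == 0 then m.-1 else (dist z h).-1.
Proof.
have := ltn_ord z; have := ltn_ord h; rewrite /dist /= /pv.
case E: (nat_of_ord h == 0); crush.
Qed.

Lemma dist_succ_l a b : dist (succo a) b = if dist a b == 0 then m.-1 else (dist a b).-1.
Proof.
have := ltn_ord a; have := ltn_ord b; rewrite /dist /= /sv.
case E: (a.+1 == m); crush.
Qed.

Lemma dist_pred_l a b : dist (predo a) b = if dist a b == m.-1 then 0 else (dist a b).+1.
Proof.
have := ltn_ord a; have := ltn_ord b; rewrite /dist /= /pv.
case E: (nat_of_ord a == 0); crush.
Qed.

End Cyc.

Lemma card_inj_nat (T : finType) (A : {set T}) (f : T -> nat) N :
  {in A &, injective f} -> (forall x, x \in A -> f x < N) -> #|A| <= N.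
Proof.
move=> finj fb; rewrite cardE -(size_map f) -(size_iota 0 N).
apply: uniq_leq_size.
  rewrite map_inj_in_uniq ?enum_uniq // => x y; rewrite !mem_enum; exact: finj.
move=> y /mapP [x]; rewrite mem_enum => xA ->; rewrite mem_iota /=; exact: fb.
Qed.

Section L.
Variables (m k : nat).

Definition Lset (z : 'I_m) : {set 'I_m} :=
  [set h | (dist z h %% 3 == 2) && (dist z h < 3 * k)].

Lemma card_L z : #|Lset z| <= k.
Proof.
apply: (card_inj_nat (f := fun h => dist z h %/ 3)).
  move=> x y; rewrite !inE => /andP [/eqP x2 _] /andP [/eqP y2 _] E.
  apply: (dist_inj (z := z)); lia.
move=> x; rewrite inE => /andP [_ ?]; lia.
Qed.

Lemma inL z h : (h \in Lset z) = (dist z h %% 3 == 2) && (dist z h < 3 * k).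
Proof. by rewrite inE. Qed.

Lemma L_dom z h : 3 * k <= m -> 0 < dist z h <= 3 * k -> h \in nbh (Lset z).
Proof.
move=> Hm Hd; have Hl := dist_lt z h; rewrite inE.
case H2: (dist z h %% 3 == 2).
  by rewrite inL H2 /=; lia.
apply/orP; right; apply/existsP.
case H1: (dist z h %% 3 == 1).
  exists (succo h); rewrite cyc_succ andbT inL dist_succ_r.
  case: ifP => ?; apply/andP; split; lia.
exists (predo h); rewrite cyc_pred andbT inL dist_pred_r.
case: ifP => ?; apply/andP; split; lia.
Qed.

End L.

Lemma nbhS m (S S' : {set 'I_m}) : S \subset S' -> nbh S \subset nbh S'.
Proof.
move=> /subsetP sub; apply/subsetP => x; rewrite !inE => /orP [/sub ->//|].
case/existsP => y /andP [/sub yS e]; apply/orP; right; apply/existsP; exists y.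
by rewrite yS.
Qed.

Lemma nbh_in m (S : {set 'I_m}) h y : y \in S -> (h == y) || cycle_rel m h y -> h \in nbh S.
Proof.
move=> yS /orP [/eqP -> | e]; rewrite inE ?yS //.
by apply/orP; right; apply/existsP; exists y; rewrite yS.
Qed.

Section Full.
Variables (m k : nat).
Hypothesis k1 : 1 <= k.

Lemma L_full0 (z h : 'I_m) : m = 3 * k -> h \in nbh (Lset k z).
Proof.
move=> Hm.
case E: (dist z h == 0); last by apply: L_dom; have := dist_lt z h; lia.
move/eqP/dist0: E => ->.
apply: (nbh_in (y := predo z)); last by rewrite cyc_pred orbT.
rewrite inL dist_pred_r.
have -> : dist z z = 0 by apply/eqP; rewrite /dist leqnn subnn.
rewrite eqxx; lia.
Qed.

Lemma S2_full (z h : 'I_m) : m = 3 * k + 2 -> h \in nbh (z |: Lset k z).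
Proof.
move=> Hm.
case E: (dist z h == 0).
  by move/eqP/dist0: E => ->; apply: (nbh_in (y := z)); rewrite ?setU11 ?eqxx.
case E2: (dist z h == m.-1).
  apply: (nbh_in (y := succo h)); last by rewrite cyc_succ orbT.
  have -> : succo h = z by apply: dist0; rewrite dist_succ_r E2.
  exact: setU11.
apply: (subsetP (nbhS (subsetUr [set z] _))).
apply: L_dom; have := dist_lt z h; lia.
Qed.

Definition zsel (a b : 'I_m) : 'I_m :=
  if b == a then a else if dist a b %% 3 == 2 then a
  else if dist a b %% 3 == 0 then succo a else predo a.

Definition heavy (a b : 'I_m) : {set 'I_m} := a |: Lset k (zsel a b).

Lemma heavy_a a b : a \in heavy a b.
Proof. exact: setU11. Qed.

Lemma card_heavy a b : #|heavy a b| <= k.+1.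
Proof. rewrite cardsU1; have := card_L k (zsel a b); case: (_ \notin _); lia. Qed.

Hypothesis Hm : m = 3 * k + 1.

Lemma heavy_b a b : b \in heavy a b.
Proof.
rewrite /heavy /zsel; case: eqP => [->|nab]; first exact: setU11.
apply/setU1P; right; rewrite inL.
have Hl := dist_lt a b.
have H0 : dist a b != 0 by apply/eqP => /dist0.
case: ifP => E2; first (apply/andP; split; lia).
case: ifP => E0.
  rewrite dist_succ_l (negbTE H0); apply/andP; split; lia.
rewrite dist_pred_l; case: ifP => E; apply/andP; split; lia.
Qed.

Lemma heavy_full a b h : h \in nbh (heavy a b).
Proof.
case E: (h == zsel a b).
  move/eqP: E => ->; rewrite /zsel.
  case: ifP => _; first by apply: (nbh_in (y := a)); rewrite ?heavy_a ?eqxx.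
  case: ifP => _; first by apply: (nbh_in (y := a)); rewrite ?heavy_a ?eqxx.
  case: ifP => _.
    apply: (nbh_in (y := a)); rewrite ?heavy_a //.
    by have := cyc_pred (succo a); rewrite predo_succo => ->; rewrite orbT.
  apply: (nbh_in (y := a)); rewrite ?heavy_a //.
  by have := cyc_succ (predo a); rewrite succo_predo => ->; rewrite orbT.
apply: (subsetP (nbhS (subsetUr [set a] _))).
apply: L_dom; first lia.
have := dist_lt (zsel a b) h.
have : dist (zsel a b) h != 0 by apply/eqP => /dist0 H; rewrite H eqxx in E.
lia.
Qed.

End Full.

Lemma card_sumD (G H : finType) (D : {set G * H}) :
  #|D| = \sum_g #|[set h | (g, h) \in D]|.
Proof.
transitivity (\sum_g \sum_(h | h \in [set h | (g, h) \in D]) 1).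
  rewrite pair_big_dep /= -sum1_card; apply: eq_bigl => -[g h] /=.
  by rewrite inE.
by apply: eq_bigr => g _; rewrite sum1_card.
Qed.

Lemma dom_le (T : finType) (e : rel T) D : dominating e D -> domination_number e <= #|D|.
Proof.
rewrite /domination_number => HD.
have : D \in index_enum {set T} by rewrite mem_index_enum.
elim: (index_enum _) => [//|x r IH]; rewrite in_cons big_cons.
case/orP => [/eqP <-|/IH H]; first by rewrite HD geq_minl.
by case: ifP => _ //; rewrite geq_min H orbT.
Qed.

Lemma dom_ge (T : finType) (e : rel T) t :
  (forall D, dominating e D -> t <= #|D|) -> t <= #|T| -> t <= domination_number e.
Proof.
move=> H HT; rewrite /domination_number.
apply: (big_ind (fun v => t <= v)) => //.
  by move=> x y; rewrite leq_min => -> ->.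
Qed.

Lemma sum_cond (I : finType) (A : {set I}) : \sum_i (i \in A : nat) = #|A|.
Proof.
rewrite -sum1_card [in RHS]big_mkcond; apply: eq_bigr => i _; by case: (i \in A).
Qed.

Section Lower.
Variables (n m : nat) (c : 'I_m).
Definition f0 : {ffun 'I_n -> 'I_m} := [ffun _ => c].
Notation e := (sierp_rel (cycle_rel n) (cycle_rel m) f0).
Notation Dg D g := [set h | (g, h) \in D].

Lemma low1 (D : {set 'I_n * 'I_m}) g : dominating e D -> [set~ c] \subset nbh (Dg D g).
Proof.
move=> HD; apply/subsetP => h; rewrite in_setC1 => hc.
move/forallP/(_ (g, h)): HD => /orP [Hin | /existsP [y /andP [yD Hy]]].
  by rewrite inE inE Hin.
rewrite /sierp_rel /= in Hy.
case/orP: Hy => [/andP [/eqP gy ey] | /and3P [eg /eqP hc' /eqP yc]].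
  apply: (nbh_in (y := y.2)); last by rewrite ey orbT.
  by rewrite inE gy -surjective_pairing.
by rewrite hc' ffunE eqxx in hc.
Qed.

Lemma low2 (D : {set 'I_n * 'I_m}) g : dominating e D -> c \notin nbh (Dg D g) ->
  exists g', cycle_rel n g g' /\ (g', c) \in D.
Proof.
move=> HD Hc.
move/forallP/(_ (g, c)): HD => /orP [Hin | /existsP [y /andP [yD Hy]]].
  by rewrite inE inE Hin in Hc.
rewrite /sierp_rel /= in Hy.
case/orP: Hy => [/andP [/eqP gy ey] | /and3P [eg /eqP hc' /eqP yc]].
  case/negP: Hc; apply: (nbh_in (y := y.2)); last by rewrite ey orbT.
  by rewrite inE gy -surjective_pairing.
exists y.1; split => //.
by rewrite ffunE in yc; rewrite -yc -surjective_pairing.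
Qed.

Lemma low3 (D : {set 'I_n * 'I_m}) g : dominating e D -> m.-1 <= 3 * #|Dg D g|.
Proof.
move=> HD; apply: leq_trans (card_nbh _).
have := subset_leq_card (low1 g HD); by rewrite cardsC1 card_ord.
Qed.

End Lower.

Section LowerP.
Variables (n m k : nat) (c : 'I_m).
Notation e := (sierp_rel (cycle_rel n) (cycle_rel m) (f0 n c)).
Notation Dg D g := [set h | (g, h) \in D].

Lemma sumk (K : nat) : \sum_(g : 'I_n) K = K * n.
Proof. by rewrite sum_nat_const card_ord mulnC. Qed.

Lemma low_const (D : {set 'I_n * 'I_m}) K : dominating e D ->
  3 * K <= m.+1 -> K * n <= #|D|.
Proof.
move=> HD HK; rewrite card_sumD -sumk; apply: leq_sum => g _.
have := low3 g HD; move: (#|_|) => X; lia.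
Qed.

Lemma low_p1 (D : {set 'I_n * 'I_m}) : m = 3 * k + 1 -> dominating e D ->
  k * n + (n + 2) %/ 3 <= #|D|.
Proof.
move=> Hm HD.
set Hv := [set g | k < #|Dg D g|].
have Hk : forall g, k <= #|Dg D g| by move=> g; have := low3 g HD; move: #|Dg D g| => X; lia.
have Hnot : forall g, g \notin Hv -> c \notin nbh (Dg D g).
  move=> g; rewrite inE -leqNgt => le; apply/negP => cin.
  have : [set: 'I_m] \subset nbh (Dg D g).
    apply/subsetP => h _; case: (eqVneq h c) => [->//|hc].
    by apply: (subsetP (low1 g HD)); rewrite in_setC1.
  move/subset_leq_card; rewrite cardsT card_ord => H.
  have := card_nbh (Dg D g); move: #|nbh _| H => Y H; move: #|Dg D g| le => X le; lia.
have HvDom : forall g, g \in nbh Hv.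
  move=> g; case: (boolP (g \in Hv)) => gH; first by rewrite inE gH.
  have [g' [eg g'D]] := low2 HD (Hnot g gH).
  apply: (nbh_in (y := g')); last by rewrite eg orbT.
  apply/negPn/negP => ng'; case/negP: (Hnot g' ng').
  by apply: (nbh_in (y := c)); rewrite ?inE ?g'D ?eqxx.
have Hn : n <= 3 * #|Hv|.
  apply: leq_trans (card_nbh Hv).
  have : [set: 'I_n] \subset nbh Hv by apply/subsetP => g _; exact: HvDom.
  by move/subset_leq_card; rewrite cardsT card_ord.
rewrite card_sumD; apply: (@leq_trans (\sum_g (k + (g \in Hv)))).
  rewrite big_split /= sum_cond sumk; lia.
apply: leq_sum => g _; case: (boolP (g \in Hv)) => gh.
  by move: gh; rewrite inE addn1.
by rewrite addn0.
Qed.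

End LowerP.

Lemma up_gen n m (f : {ffun 'I_n -> 'I_m}) (S : 'I_n -> {set 'I_m}) :
  (forall g h, h \in nbh (S g) \/ exists g', [/\ cycle_rel n g g', h = f g' & f g \in S g']) ->
  domination_number (sierp_rel (cycle_rel n) (cycle_rel m) f) <= \sum_g #|S g|.
Proof.
move=> HS.
set D := [set x : 'I_n * 'I_m | x.2 \in S x.1].
have -> : \sum_g #|S g| = #|D|.
  rewrite card_sumD; apply: eq_bigr => g _; apply: eq_card => h.
  by rewrite !inE.
apply: dom_le; apply/forallP => -[g h].
case: (HS g h) => [Hn | [g' [eg hf fg]]].
  rewrite inE in Hn; case/orP: Hn => [hS | /existsP [y /andP [yS ey]]].
    by rewrite inE hS.
  apply/orP; right; apply/existsP; exists (g, y); rewrite inE /= yS /=.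
  by rewrite /sierp_rel /= eqxx ey.
apply/orP; right; apply/existsP; exists (g', f g); rewrite inE /= fg /=.
by rewrite /sierp_rel /= eg hf !eqxx orbT.
Qed.

Lemma sumk' n (K : nat) : \sum_(g : 'I_n) K = K * n.
Proof. by rewrite sum_nat_const card_ord mulnC. Qed.

Lemma up0 n k (f : {ffun 'I_n -> 'I_(3 * k)}) : 1 <= k ->
  domination_number (sierp_rel (cycle_rel n) (cycle_rel (3 * k)) f) <= k * n.
Proof.
move=> k1; apply: leq_trans (up_gen (S := fun g => Lset k (f g)) _) _.
  by move=> g h; left; apply: L_full0.
apply: (@leq_trans (\sum_(g : 'I_n) k)); last by rewrite sumk'.
apply: leq_sum => g _; exact: card_L.
Qed.

Lemma up2 n k (f : {ffun 'I_n -> 'I_(3 * k + 2)}) : 1 <= k ->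
  domination_number (sierp_rel (cycle_rel n) (cycle_rel (3 * k + 2)) f) <= k.+1 * n.
Proof.
move=> k1; apply: leq_trans (up_gen (S := fun g => f g |: Lset k (f g)) _) _.
  by move=> g h; left; apply: S2_full.
apply: (@leq_trans (\sum_(g : 'I_n) k.+1)); last by rewrite sumk'.
apply: leq_sum => g _; rewrite cardsU1.
have := card_L k (f g); case: (_ \notin _); lia.
Qed.

Section Up1.
Variables (n k : nat).
Notation m := (3 * k + 1).

Definition Cen : {set 'I_n} :=
  [set g : 'I_n | (g %% 3 == 1) || ((g.+1 == n) && (g %% 3 == 0))].

Lemma card_Cen : #|Cen| <= (n + 2) %/ 3.
Proof.
apply: (card_inj_nat (f := fun g : 'I_n => val g %/ 3)).
  move=> x y; rewrite !inE => Hx Hy /= E; apply: val_inj => /=.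
  have := ltn_ord x; have := ltn_ord y; move: Hx Hy E.
  case/orP => [/eqP ?|/andP [/eqP ? /eqP ?]]; case/orP => [/eqP ?|/andP [/eqP ? /eqP ?]]; lia.
move=> x; rewrite inE /= => Hx; have := ltn_ord x; move: Hx.
case/orP => [/eqP ?|/andP [/eqP ? /eqP ?]]; lia.
Qed.

Definition cen (g : 'I_n) : 'I_n := if g %% 3 == 0 then succo g else predo g.

Lemma cenP g : g \notin Cen ->
  [/\ cen g \in Cen, cycle_rel n g (cen g) & g = predo (cen g) \/ g = succo (cen g)].
Proof.
rewrite /cen inE negb_or negb_and => /andP [H1 H2]; have Hg := ltn_ord g.
case: ifP => E.
  split; [|exact: cyc_succ| by left; rewrite predo_succo].
  rewrite inE /= /sv; apply/orP; left; move: H1 H2 E; case: ifP; lia.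
split; [|exact: cyc_pred| by right; rewrite succo_predo].
rewrite inE /= /pv; apply/orP; left; move: H1 H2 E; case: ifP; lia.
Qed.

Lemma up1 (f : {ffun 'I_n -> 'I_m}) : 1 <= k ->
  domination_number (sierp_rel (cycle_rel n) (cycle_rel m) f) <= k * n + (n + 2) %/ 3.
Proof.
move=> k1.
pose S g := if g \in Cen then heavy k (f (predo g)) (f (succo g)) else Lset k (f (cen g)).
apply: leq_trans (up_gen (S := S) _) _.
  move=> g h; rewrite /S; case: ifP => gC.
    by left; apply: heavy_full.
  case: (eqVneq h (f (cen g))) => [->|hne].
    right; exists (cen g); have [cC ec gnb] := cenP (negbT gC).
    split => //; rewrite cC.
    by case: gnb => {1}->; [exact: heavy_a | exact: heavy_b].
  left; apply: L_dom; first lia.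
  have := dist_lt (f (cen g)) h.
  have : dist (f (cen g)) h != 0 by apply/eqP => /dist0 H; rewrite H eqxx in hne.
  lia.
apply: (@leq_trans (\sum_g (k + (g \in Cen)))).
  apply: leq_sum => g _; rewrite /S; case: ifP => gC.
    by rewrite (leq_trans (card_heavy _ _ _)) // addn1.
  by rewrite (leq_trans (card_L _ _)) // addn0.
rewrite big_split /= sum_cond sumk' leq_add2l; exact: card_Cen.
Qed.

End Up1.

Lemma main_gen n m t (c : 'I_m) :
  (forall f : {ffun 'I_n -> 'I_m}, domination_number (sierp_rel (cycle_rel n) (cycle_rel m) f) <= t) ->
  (forall D, dominating (sierp_rel (cycle_rel n) (cycle_rel m) (f0 n c)) D -> t <= #|D|) ->
  t <= n * m ->
  upper_sierp_dom (cycle_rel n) (cycle_rel m) = t.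
Proof.
move=> Hup Hlow Ht; apply/eqP; rewrite eqn_leq; apply/andP; split.
  by apply/bigmax_leqP => f _; apply: Hup.
apply: leq_trans (leq_bigmax (f0 n c)).
apply: dom_ge => //; by rewrite card_prod !card_ord.
Qed.

Unset Implicit Arguments.

Theorem theorem3p2 (n k p : nat) :
  3 <= n -> 1 <= k -> p <= 2 ->
  upper_sierp_dom (cycle_rel n) (cycle_rel (3 * k + p)) =
    (if p == 0 then k * n
     else if p == 1 then k * n + (n + 2) %/ 3
     else k.+1 * n).
Proof.
move=> n3 k1; case: p => [|[|[|p]]] // _ /=.
- rewrite addn0; have c : 'I_(3 * k) by apply: (@Ordinal _ 0); lia.
  apply: (main_gen (c := c)).
  + by move=> f; apply: up0.
  + by move=> D HD; apply: (low_const (K := k) HD); lia.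
  + nia.
- have c : 'I_(3 * k + 1) by apply: (@Ordinal _ 0); lia.
  apply: (main_gen (c := c)).
  + by move=> f; apply: up1.
  + by move=> D HD; apply: (low_p1 (k := k) _ HD).
  + have : (n + 2) %/ 3 <= n by lia.
    nia.
- have c : 'I_(3 * k + 2) by apply: (@Ordinal _ 0); lia.
  apply: (main_gen (c := c)).
  + by move=> f; apply: up2.
  + by move=> D HD; apply: (low_const (K := k.+1) HD); lia.
  + nia.
Qed.
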